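(* Let $\alpha>0$ and $\Delta=\sqrt{1+\alpha^2}$. Let $\gamma_1(\theta)=(\cos\theta,\sin\theta,0)$ be the unit circle and $\gamma_2(\phi)=(\alpha\cos\phi+\Delta,0,\alpha\sin\phi)$ the circle of radius $\alpha$ in the $xz$-plane centered at $(\Delta,0,0)$. Then their Möbius cross-energy equals $4\pi^2$, i.e. $$2\int_0^{2\pi}\!\!\int_0^{2\pi}\frac{\alpha\,d\theta\,d\phi}{\left(\alpha\cos\theta+\sqrt{1+\alpha^2}-\cos\phi\right)^2+\sin^2\phi+\alpha^2\sin^2\theta}=4\pi^2 .$$
   Context: The Möbius cross-energy of two disjoint closed curves $\gamma_i,\gamma_j$ in $\mathbb R^3$ is taken with the convention that each pair of line elements is counted twice: $E_c=2\int\int \frac{|\dot\gamma_i(u)||\dot\gamma_j(v)|}{|\gamma_i(u)-\gamma_j(v)|^2}\,du\,dv$. *)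

(* Defs.v *)
From Stdlib Require Import Reals.
From Coquelicot Require Import Coquelicot.
Open Scope R_scope.

Definition pt3 := (R * R * R)%type.

Definition px (p : pt3) : R := fst (fst p).
Definition py (p : pt3) : R := snd (fst p).
Definition pz (p : pt3) : R := snd p.

Definition norm3 (p : pt3) : R := sqrt (px p ^ 2 + py p ^ 2 + pz p ^ 2).
Definition sub3 (p q : pt3) : pt3 :=
  (px p - px q, py p - py q, pz p - pz q).

Definition speed (g : R -> pt3) (t : R) : R :=
  norm3 (Derive (fun s => px (g s)) t,
         Derive (fun s => py (g s)) t,
         Derive (fun s => pz (g s)) t).

(* Moebius cross-energy of two closed curves parametrized over [0, 2*PI],
   with the convention that each pair of line elements is counted twice:
   E_c = 2 * int int |g1'(u)| |g2'(v)| / |g1(u) - g2(v)|^2 du dv. *)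
Definition cross_energy (g1 g2 : R -> pt3) : R :=
  2 * RInt (fun u =>
        RInt (fun v => speed g1 u * speed g2 v / (norm3 (sub3 (g1 u) (g2 v))) ^ 2)
             0 (2 * PI))
      0 (2 * PI).

Definition gamma1 (theta : R) : pt3 := (cos theta, sin theta, 0).
Definition gamma2 (alpha : R) (phi : R) : pt3 :=
  (alpha * cos phi + sqrt (1 + alpha ^ 2), 0, alpha * sin phi).

(* Main.v *)
Require Import Defs.
From Stdlib Require Import Reals Lra Psatz.
From Coquelicot Require Import Coquelicot.
Open Scope R_scope.
Lemma D_pos k x : 0 < k -> 0 < (1+k)+(1-k)*cos x.
Proof. intros. pose proof (COS_bound x). destruct (Rle_dec k 1); nra. Qed.
Lemma E_pos k x : 0 < k -> 0 < (1+k^2)+(1-k^2)*cos x.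
Proof. intros. pose proof (COS_bound x). assert (0 < k^2) by nra. destruct (Rle_dec (k^2) 1).
 - assert (0 <= (1-k^2)*(cos x + 1)) by (apply Rmult_le_pos; lra). nra.
 - assert (0 <= (k^2-1)*(1 - cos x)) by (apply Rmult_le_pos; lra). nra. Qed.
Lemma G_deriv k x : 0<k -> is_derive (fun x => x + 2 * atan ((k-1)*sin x / ((1+k)+(1-k)*cos x))) x (2*k/((1+k^2)+(1-k^2)*cos x)).
intros H. pose proof (D_pos k x H). pose proof (E_pos k x H). auto_derive. lra.
set (c := cos x) in *. set (s := sin x) in *. set (D := 1 + k + (1 - k) * c) in *.
assert (hsc : s^2 = 1 - c^2) by (unfold s,c; pose proof (sin2_cos2 x); unfold Rsqr in *; nra).
assert (HN: 1 + (k - 1) * s * / D * ((k - 1) * s * / D * 1) = 2*((1+k^2)+(1-k^2)*c) / D^2).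
{ field_simplify; try lra. rewrite hsc. unfold D. field. fold D; lra. }
rewrite HN. field_simplify; try (split; lra); try lra. rewrite hsc. unfold D. field. lra.
Qed.
Lemma key_int k : 0 < k ->
  is_RInt (fun x => 2*k/((1+k^2)+(1-k^2)*cos x)) 0 (2*PI) (2*PI).
Proof.
intros Hk.
set (G := fun x => x + 2 * atan ((k-1)*sin x / ((1+k)+(1-k)*cos x))).
assert (E : minus (G (2*PI)) (G 0) = 2*PI).
{ unfold G, minus, plus, opp; simpl. rewrite sin_2PI, sin_0.
  unfold Rdiv. rewrite !Rmult_0_r, !Rmult_0_l, atan_0. ring. }
pattern (2*PI) at 2. rewrite <- E.
apply (is_RInt_derive G (fun x => 2*k/((1+k^2)+(1-k^2)*cos x))).
+ intros x _. apply G_deriv. exact Hk.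
+ intros x _. apply (ex_derive_continuous (K:=R_AbsRing) (V:=R_NormedModule)). pose proof (E_pos k x Hk). auto_derive. lra.
Qed.

Lemma gen_int a b s : 0 < s -> 0 < a + b -> 0 < a - b -> s^2 = a^2 - b^2 ->
  is_RInt (fun x => s/(a + b*cos x)) 0 (2*PI) (2*PI).
Proof.
intros Hs Hp Hm Hsq.
set (k := s/(a+b)).
assert (Hk: 0 < k) by (unfold k; apply Rdiv_lt_0_compat; lra).
assert (Hk2 : k^2 = (a-b)/(a+b)).
{ unfold k. replace ((s/(a+b))^2) with (s^2/(a+b)^2) by (field; lra).
  rewrite Hsq. field. lra. }
apply is_RInt_ext with (fun x => 2*k/((1+k^2)+(1-k^2)*cos x)).
- intros x _. pose proof (COS_bound x).
  assert (0 < a + b * cos x).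
  { destruct (Rle_dec 0 b). nra. nra. }
  rewrite Hk2. match goal with |- ?l = ?r => change (@eq R l r) end. unfold k. field. lra.
- apply key_int. exact Hk.
Qed.

Ltac toR := match goal with |- ?l = ?r => change (@eq R l r) end.

Lemma inner_lem (F G : R -> R) c : (forall v, F v = c * G v) ->
  is_RInt G 0 (2*PI) (2*PI) -> RInt F 0 (2*PI) = c*(2*PI).
Proof.
intros HF HG. rewrite (RInt_ext F (fun v => c * G v)) by (intros; apply HF).
apply is_RInt_unique. apply (is_RInt_scal G 0 (2*PI) c (2*PI)). exact HG.
Qed.

Lemma speed1 u : speed gamma1 u = 1.
Proof.
unfold speed, norm3, gamma1, px, py, pz; cbn [fst snd].
replace (Derive (fun s => cos s) u) with (- sin u) by (symmetry; apply is_derive_unique; auto_derive; auto; ring).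
replace (Derive (fun s => sin s) u) with (cos u) by (symmetry; apply is_derive_unique; auto_derive; auto; ring).
rewrite Derive_const.
replace ((- sin u) ^ 2 + cos u ^ 2 + 0 ^ 2) with 1. apply sqrt_1.
pose proof (sin2_cos2 u). unfold Rsqr in *. nra.
Qed.

Lemma speed2 alpha v : 0 < alpha -> speed (gamma2 alpha) v = alpha.
Proof.
intros Ha.
unfold speed, norm3, gamma2, px, py, pz; cbn [fst snd].
replace (Derive (fun s => alpha * cos s + sqrt (1 + alpha^2)) v) with (- alpha * sin v) by (symmetry; apply is_derive_unique; auto_derive; auto; ring).
replace (Derive (fun s => alpha * sin s) v) with (alpha * cos v) by (symmetry; apply is_derive_unique; auto_derive; auto; ring).
rewrite Derive_const.
replace ((- alpha * sin v) ^ 2 + 0 ^ 2 + (alpha * cos v) ^ 2) with (alpha^2). apply sqrt_pow2; lra.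
pose proof (sin2_cos2 v). unfold Rsqr in *. nra.
Qed.

Theorem mainTheorem2 (alpha : R) (Halpha : 0 < alpha) :
  cross_energy gamma1 (gamma2 alpha) = 4 * PI ^ 2 /\
  2 * RInt (fun theta =>
         RInt (fun phi =>
           alpha / ((alpha * cos theta + sqrt (1 + alpha ^ 2) - cos phi) ^ 2
                    + sin phi ^ 2 + alpha ^ 2 * sin theta ^ 2))
           0 (2 * PI))
       0 (2 * PI) = 4 * PI ^ 2.
Proof.
set (D := sqrt (1 + alpha^2)).
assert (HD2 : D^2 = 1 + alpha^2) by (unfold D; apply pow2_sqrt; nra).
assert (HD0 : 0 <= D) by (unfold D; apply sqrt_pos).
assert (HD1 : 1 < D) by nra.
assert (HDa : alpha < D) by nra.
set (f1 := fun u => alpha / (D + (-1) * cos u)).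
set (f2 := fun v => 1 / (D + alpha * cos v)).
assert (I1 : is_RInt f1 0 (2*PI) (2*PI)) by (apply gen_int; try lra; rewrite HD2; ring).
assert (I2 : is_RInt f2 0 (2*PI) (2*PI)) by (apply gen_int; try lra; rewrite HD2; ring).
assert (Hden : forall u v, (cos u - (alpha * cos v + D))^2 + sin u ^2 + alpha^2 * sin v ^2
                           = 2 * (D - cos u) * (D + alpha * cos v)).
{ intros u v. pose proof (sin2_cos2 u). pose proof (sin2_cos2 v). unfold Rsqr in *.
  assert (alpha^2 * (sin v ^2 + cos v ^2) = alpha^2) by (simpl; nra). nra. }
assert (Hp1 : forall u, 0 < D - cos u) by (intros u; pose proof (COS_bound u); lra).
assert (Hp2 : forall v, 0 < D + alpha * cos v) by (intros v; pose proof (COS_bound v); nra).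
split.
- unfold cross_energy.
  rewrite (RInt_ext _ (fun u => (PI * f1 u))).
  + rewrite (inner_lem (fun u => PI * f1 u) f1 PI) by (auto; intros; reflexivity). ring.
  + intros u _. rewrite (inner_lem _ f2 (f1 u / 2)). toR. field.
    * intros v. rewrite speed1, speed2 by exact Halpha.
      unfold norm3, sub3, gamma1, gamma2, px, py, pz; cbn [fst snd]. fold D.
      rewrite pow2_sqrt.
      -- replace ((cos u - (alpha * cos v + D)) ^ 2 + (sin u - 0) ^ 2 + (0 - alpha * sin v) ^ 2)
           with (2 * (D - cos u) * (D + alpha * cos v)) by (rewrite <- Hden; ring).
         unfold f1, f2. specialize (Hp1 u). specialize (Hp2 v). field. lra.
      -- pose proof (pow2_ge_0 (cos u - (alpha * cos v + D))). pose proof (pow2_ge_0 (sin u - 0)).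
         pose proof (pow2_ge_0 (0 - alpha * sin v)). lra.
    * exact I2.
- rewrite (RInt_ext _ (fun u => (PI * f2 u))).
  + rewrite (inner_lem (fun u => PI * f2 u) f2 PI) by (auto; intros; reflexivity). ring.
  + intros t _. rewrite (inner_lem _ f1 (f2 t / 2)). toR. field.
    * intros p. fold D.
      replace ((alpha * cos t + D - cos p) ^ 2 + sin p ^ 2 + alpha ^ 2 * sin t ^ 2)
           with (2 * (D - cos p) * (D + alpha * cos t)) by (rewrite <- Hden; ring).
      unfold f1, f2. specialize (Hp1 p). specialize (Hp2 t). field. lra.
    * exact I1.
Qed.
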